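(* Let $C=(c_{xy})\in\mathrm{Cor}(n,m)$ and let $u_1,\dots,u_n,v_1,\dots,v_m$ be unit vectors in $\mathbb{R}^{n+m}$ with $c_{xy}=\langle u_x,v_y\rangle$ for all $x,y$. Define $\ell^x_a:=\frac12(1,a\,u_x)\in\mathbb{R}^{n+m+1}$ for $x\in[n]$, $a\in\{\pm1\}$, and $\tilde\ell^y_b:=\frac12(1,b\,v_y)$ for $y\in[m]$, $b\in\{\pm1\}$. Then $p_C(ab|xy)=\langle\ell^x_a,\tilde\ell^y_b\rangle$ for all $a,b,x,y$, and the behavior $\mathbf{p}_C$ is a Gram-Lorentz behavior.
   Context: $\mathrm{Cor}(n,m)$ is the set of matrices $C=(c_{xy})\in[-1,1]^{n\times m}$ for which there exist $d\ge1$, Hermitian $d\times d$ matrices $M_1,\dots,M_n,N_1,\dots,N_m$ with eigenvalues in $[-1,1]$ and a Hermitian psd trace-one matrix $\rho$ on $\mathbb{C}^d\otimes\mathbb{C}^d$ with $c_{xy}=\mathrm{Tr}((M_x\otimes N_y)\rho)$ for all $x,y$. (Equivalently, by Tsirelson's theorem, such unit vectors $u_x,v_y$ exist.) For $C\in\mathrm{Cor}(n,m)$, $\mathbf{p}_C$ is the behavior in the $(n,m,2,2)$-scenario with outcomes $a,b\in\{\pm1\}$ given by $p_C(ab|xy)=\frac{1+ab\,c_{xy}}{4}$; it is a quantum behavior. For a behavior $\mathbf{p}$ in an $(m_A,m_B,o_A,o_B)$-scenario let $N:=m_Ao_A+m_Bo_B$ and let $\mathcal{A}(\mathbf{p})$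 be the set of real symmetric $N\times N$ matrices $R$ indexed by $([m_A]\times[o_A])\cup([m_B]\times[o_B])$ with $\sum_{a,a'}R_{xa,x'a'}=1$ for all $x,x'$, $\sum_{a,b}R_{xa,yb}=1$ for all $x,y$, $\sum_{b,b'}R_{yb,y'b'}=1$ for all $y,y'$, and $R_{xa,yb}=p(ab|xy)$ for all $a,b,x,y$. With the Lorentz cone $\mathcal{L}_k:=\{(c,x)\in\mathbb{R}\times\mathbb{R}^{k-1}:c\ge\|x\|\}$, a matrix is Gram-Lorentz if it is the Gram matrix of vectors in some $\mathcal{L}_k$; a quantum behavior $\mathbf{p}$ is Gram-Lorentz if some Gram-Lorentz matrix lies in $\mathcal{A}(\mathbf{p})$. *)

(* Defs.v *)
From HB Require Import structures.
From mathcomp Require Import all_boot all_order all_algebra.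
From mathcomp Require Import complex mxtens.
Set Implicit Arguments.
Unset Strict Implicit.
Unset Printing Implicit Defensive.
Import Order.TTheory GRing.Theory Num.Theory.
Local Open Scope ring_scope.

Section Defs.
Variable R : rcfType.
Local Notation C := R[i].

Definition dotr (k : nat) (u v : 'rV[R]_k) : R := \sum_(i < k) u 0 i * v 0 i.

(* outcome bool encodes {+1,-1}: true = +1, false = -1 *)
Definition sgnb (a : bool) : R := if a then 1 else -1.

Definition adjmx (k : nat) (A : 'M[C]_k) : 'M[C]_k := map_mx Num.conj A^T.

Definition hermitian (k : nat) (A : 'M[C]_k) : Prop := adjmx A = A.

Definition psd (k : nat) (A : 'M[C]_k) : Prop :=
  hermitian A /\ forall w : 'rV[C]_k, 0 <= (w *m A *m map_mx Num.conj w^T) 0 0.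

Definition obs_pm1 (k : nat) (A : 'M[C]_k) : Prop :=
  hermitian A /\ forall l : C, eigenvalue A l -> -1 <= l <= 1.

Definition density (d : nat) (rho : 'M[C]_(d * d)) : Prop :=
  psd rho /\ \tr rho = 1.

Definition Cor (n m : nat) (c : 'M[R]_(n, m)) : Prop :=
  (forall x y, -1 <= c x y <= 1) /\
  exists (d : nat) (M : 'I_n -> 'M[C]_d) (N : 'I_m -> 'M[C]_d)
         (rho : 'M[C]_(d * d)),
    (0 < d)%N /\ (forall x, obs_pm1 (M x)) /\ (forall y, obs_pm1 (N y)) /\
    density rho /\
    forall x y, real_complex R (c x y) = \tr (tensmx (M x) (N y) *m rho).

(* A behavior in an (mA, mB, |OA|, |OB|)-scenario: p a b x y = p(ab|xy). *)
Definition behavior (mA mB : nat) (OA OB : finType) :=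
  OA -> OB -> 'I_mA -> 'I_mB -> R.

Definition pC (n m : nat) (c : 'M[R]_(n, m)) : behavior n m bool bool :=
  fun a b x y => (1 + sgnb a * sgnb b * c x y) / 4.

Definition quantum (mA mB : nat) (OA OB : finType) (p : behavior mA mB OA OB)
  : Prop :=
  exists (d : nat) (E : 'I_mA -> OA -> 'M[C]_d) (F : 'I_mB -> OB -> 'M[C]_d)
         (rho : 'M[C]_(d * d)),
    (0 < d)%N /\ density rho /\
    (forall x a, psd (E x a)) /\ (forall x, \sum_a E x a = 1%:M) /\
    (forall y b, psd (F y b)) /\ (forall y, \sum_b F y b = 1%:M) /\
    forall a b x y,
      real_complex R (p a b x y) = \tr (tensmx (E x a) (F y b) *m rho).

Definition bidx (mA mB : nat) (OA OB : finType) : finType :=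
  ('I_mA * OA + 'I_mB * OB)%type.

Definition inA (mA mB : nat) (OA OB : finType) (p : behavior mA mB OA OB)
  (Q : bidx mA mB OA OB -> bidx mA mB OA OB -> R) : Prop :=
  (forall i j, Q i j = Q j i) /\
  (forall x x', \sum_a \sum_a' Q (inl (x, a)) (inl (x', a')) = 1) /\
  (forall x y, \sum_a \sum_b Q (inl (x, a)) (inr (y, b)) = 1) /\
  (forall y y', \sum_b \sum_b' Q (inr (y, b)) (inr (y', b')) = 1) /\
  (forall a b x y, Q (inl (x, a)) (inr (y, b)) = p a b x y).

Definition lorentz (k : nat) (w : 'rV[R]_(1 + k)) : Prop :=
  Num.sqrt (dotr (rsubmx w) (rsubmx w)) <= lsubmx w 0 0.

Definition gram_lorentz (I : finType) (Q : I -> I -> R) : Prop :=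
  exists (k : nat) (w : I -> 'rV[R]_(1 + k)),
    (forall i, lorentz (w i)) /\ forall i j, Q i j = dotr (w i) (w j).

Definition gram_lorentz_behavior (mA mB : nat) (OA OB : finType)
  (p : behavior mA mB OA OB) : Prop :=
  quantum p /\ exists Q, inA p Q /\ gram_lorentz Q.

Definition ellv (k : nat) (u : 'rV[R]_k) (a : bool) : 'rV[R]_(1 + k) :=
  2^-1 *: row_mx (const_mx 1) (sgnb a *: u).

End Defs.

(* Main.v *)
Require Import Defs.
From HB Require Import structures.
From mathcomp Require Import all_boot all_order all_algebra.
From mathcomp Require Import complex mxtens.
From mathcomp Require Import ring lra.
Import Order.TTheory GRing.Theory Num.Theory.
Local Open Scope ring_scope.


Lemma dotrC (R : rcfType) k (u v : 'rV[R]_k) : dotr u v = dotr v u.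
Proof. by rewrite /dotr; apply: eq_bigr => i _; rewrite mulrC. Qed.

Lemma dotrZl (R : rcfType) k (a : R) (u v : 'rV[R]_k) : dotr (a *: u) v = a * dotr u v.
Proof. by rewrite /dotr mulr_sumr; apply: eq_bigr => i _; rewrite mxE mulrA. Qed.

Lemma dotrZr (R : rcfType) k (a : R) (u v : 'rV[R]_k) : dotr u (a *: v) = a * dotr u v.
Proof. by rewrite dotrC dotrZl dotrC. Qed.

Lemma dotr_ellv (R : rcfType) k (u v : 'rV[R]_k) a b :
  dotr (ellv u a) (ellv v b) = 4^-1 * (1 + sgnb R a * sgnb R b * dotr u v).
Proof.
rewrite /ellv dotrZl dotrC dotrZl dotrC /dotr big_split_ord /= big_ord1.
rewrite !row_mxEl !mxE mulr1.
have -> : \sum_(i < k) row_mx (const_mx 1) (sgnb R a *: u) 0 (rshift 1 i) *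
   row_mx (const_mx 1) (sgnb R b *: v) 0 (rshift 1 i) =
   sgnb R a * sgnb R b * \sum_(i < k) u 0 i * v 0 i.
  rewrite mulr_sumr; apply: eq_bigr => i _; rewrite !row_mxEr !mxE; ring.
have h4 : (4 : R) = 2 * 2 by rewrite -natrM.
rewrite h4 invfM; ring.
Qed.

Lemma sgnb_sq (R : rcfType) a : sgnb R a * sgnb R a = 1 :> R.
Proof. by case: a; rewrite /sgnb ?mulr1 ?mulrNN ?mulr1. Qed.

Lemma lorentz_ellv (R : rcfType) k (u : 'rV[R]_k) a :
  dotr u u = 1 -> lorentz (ellv u a).
Proof.
move=> hu; rewrite /lorentz /ellv linearZ /= row_mxKr.
have -> : lsubmx (2^-1 *: row_mx (const_mx 1 : 'rV[R]_1) (sgnb R a *: u)) 0 0 = 2^-1.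
  by rewrite mxE mxE row_mxEl mxE mulr1.
rewrite !dotrZl !dotrZr hu mulr1. have -> : 2^-1 * (sgnb R a * (2^-1 * sgnb R a)) = (2^-1 : R) ^+ 2 by case: a; rewrite /sgnb; ring.
by rewrite sqrtr_sqr ger0_norm // invr_ge0 ler0n.
Qed.

Set Implicit Arguments. Unset Strict Implicit.
Section Spec.
Variable R : rcfType.
Local Notation C := R[i].

Lemma herm_normal d (A : 'M[C]_d) : Defs.hermitian A -> A \is normalmx.
Proof. by rewrite /Defs.hermitian /adjmx => hA; apply/normalmxP; rewrite hA. Qed.

Lemma spec_pos d (A : 'M[C]_d) (s : C) : obs_pm1 A -> (s = 1 \/ s = -1) ->
  forall w : 'rV[C]_d, 0 <= (w *m (1%:M + s *: A) *m map_mx Num.conj w^T) 0 0.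
Proof.
move=> [hA hE] hs w.
have /orthomx_spectralP eA := herm_normal hA.
set P := spectralmx A in eA; set X := spectral_diag A in eA.
have Pu : P \is unitarymx by apply: spectral_unitarymx.
have iP : invmx P = map_mx Num.conj P^T by rewrite invmx_unitary.
have PPt : P *m map_mx Num.conj P^T = 1%:M by apply/unitarymxP.
have PtP : map_mx Num.conj P^T *m P = 1%:M by rewrite -iP mulVmx // unitarymx_unit.
have eig : forall i, eigenvalue A (X 0 i).
  move=> i; apply/eigenvalueP; exists (row i P).
    rewrite -row_mul eA iP !mulmxA PPt mul1mx.
    apply/rowP => j; rewrite !mxE (bigD1 i) //= big1 => [|k nki]; rewrite !mxE ?eqxx.
      by rewrite mulr1n addr0.
    by rewrite eq_sym (negbTE nki) mulr0n mul0r.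
  apply/eqP => h0.
  have : (row i (P *m map_mx Num.conj P^T)) 0 i = 1 by rewrite mxE PPt mxE eqxx.
  by rewrite row_mul h0 mul0mx mxE => /eqP; rewrite eq_sym oner_eq0.
set D : 'rV[C]_d := \row_j (1 + s * X 0 j).
have eD : 1%:M + s *: A = map_mx Num.conj P^T *m diag_mx D *m P.
  have -> : diag_mx D = 1%:M + s *: diag_mx X.
    by apply/matrixP => i j; rewrite !mxE; case: eqP => _; rewrite ?mulr1n ?mulr0n ?mulr0 ?addr0.
  by rewrite mulmxDr mulmxDl mulmx1 PtP -scalemxAr -scalemxAl eA iP.
set z := w *m map_mx Num.conj P^T.
have ez : map_mx Num.conj w^T = map_mx Num.conj P^T *m map_mx Num.conj z^T.
  rewrite /z trmx_mul map_mxM map_trmx trmxK -map_mx_comp mulmxA.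
  rewrite (_ : map_mx _ P = P); first by rewrite PtP mul1mx.
  by apply/matrixP => i j; rewrite !mxE /= conjCK.
rewrite eD ez !mulmxA -/z -(mulmxA _ P) PPt mulmx1.
rewrite mul_mx_diag mxE; apply: sumr_ge0 => j _; rewrite !mxE.
rewrite mulrAC mulrC; apply: mulr_ge0; last exact: mul_conjC_ge0.
have /andP[h1 h2] := hE _ (eig j).
case: hs => ->; rewrite ?mul1r ?mulN1r.
  by rewrite -subr_ge0 opprK addrC in h1.
by rewrite -subr_ge0 in h2.
Qed.

Definition adj k l (X : 'M[C]_(k, l)) : 'M[C]_(l, k) := map_mx Num.conj X^T.

Lemma adjK k l (X : 'M[C]_(k, l)) : adj (adj X) = X.
Proof. by apply/matrixP => i j; rewrite !mxE conjCK. Qed.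

Lemma adjM k l p (X : 'M[C]_(k, l)) (Y : 'M[C]_(l, p)) : adj (X *m Y) = adj Y *m adj X.
Proof. by rewrite /adj trmx_mul map_mxM. Qed.

Lemma adjD k l (X Y : 'M[C]_(k, l)) : adj (X + Y) = adj X + adj Y.
Proof. by apply/matrixP => i j; rewrite !mxE rmorphD. Qed.

Lemma adjZ k l (c : C) (X : 'M[C]_(k, l)) : adj (c *: X) = Num.conj c *: adj X.
Proof. by apply/matrixP => i j; rewrite !mxE rmorphM. Qed.

Lemma adj1 k : adj (1%:M : 'M[C]_k) = 1%:M.
Proof. by rewrite /adj trmx1 map_mx1. Qed.

Lemma psd_congr k l (A : 'M[C]_k) (X : 'M[C]_(k, l)) : psd A -> psd (adj X *m A *m X).
Proof.
move=> [hA pA]; split.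
  have hA' : adj A = A := hA.
  by change (adj (adj X *m A *m X) = adj X *m A *m X); rewrite !adjM adjK hA' mulmxA.
move=> w; have := pA (w *m adj X).
by rewrite (_ : map_mx _ (w *m adj X)^T = adj (w *m adj X)) // adjM adjK !mulmxA.
Qed.

Lemma psdD k (A B : 'M[C]_k) : psd A -> psd B -> psd (A + B).
Proof.
move=> [hA pA] [hB pB]; split.
  have hA' : adj A = A := hA; have hB' : adj B = B := hB.
  by change (adj (A + B) = A + B); rewrite adjD hA' hB'.
by move=> w; rewrite mulmxDr mulmxDl mxE addr_ge0.
Qed.

Lemma psdZ k (c : C) (A : 'M[C]_k) : Num.conj c = c -> 0 <= c -> psd A -> psd (c *: A).
Proof.
move=> hc c0 [hA pA]; split.
  have hA' : adj A = A := hA.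
  by change (adj (c *: A) = c *: A); rewrite adjZ hc hA'.
by move=> w; rewrite -scalemxAr -scalemxAl mxE mulr_ge0.
Qed.

Definition Ob d (M : 'M[C]_d) (s : C) : 'M[C]_d := 2^-1 *: (1%:M + s *: M).

Lemma conj2V : Num.conj (2^-1 : C) = 2^-1.
Proof. by rewrite fmorphV rmorph_nat. Qed.

Lemma psd_Ob d (M : 'M[C]_d) (s : C) : obs_pm1 M -> (s = 1 \/ s = -1) -> psd (Ob M s).
Proof.
move=> hM hs; apply: psdZ; first exact: conj2V.
  by rewrite invr_ge0 ler0n.
split; last exact: spec_pos.
have hsc : Num.conj s = s by case: hs => ->; rewrite ?rmorph1 ?rmorphN1.
case: hM => hh _; have hM' : adj M = M := hh.
by change (adj (1%:M + s *: M) = 1%:M + s *: M); rewrite adjD adj1 adjZ hsc hM'.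
Qed.

Lemma Ob_sum d (M : 'M[C]_d) (s : C) : Ob M s + Ob M (- s) = 1%:M.
Proof.
apply/matrixP => i j; rewrite !mxE.
have h2 : (2 : C) != 0 by rewrite pnatr_eq0.
field.
done.
Qed.

Lemma tens11 m k : (1%:M : 'M[C]_m) *t (1%:M : 'M[C]_k) = 1%:M.
Proof.
apply/matrixP => i j.
case: (mxtens_indexP i) => i0 i1; case: (mxtens_indexP j) => j0 j1.
rewrite tensmxE !mxE (can_eq (@mxtens_indexK _ _)) xpair_eqE.
by case: (i0 == j0); case: (i1 == j1); rewrite ?mulr1n ?mulr0n ?mulr1 ?mulr0.
Qed.

Lemma adj_tens m k p q (A : 'M[C]_(m, k)) (B : 'M[C]_(p, q)) :
  adj (A *t B) = adj A *t adj B.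
Proof. by apply/matrixP => i j; rewrite !mxE rmorphM. Qed.

Lemma Ob_tens d (M N : 'M[C]_d) (s t : C) :
  Ob M s *t Ob N t = 4^-1 *: (1%:M *t 1%:M + t *: (1%:M *t N) + s *: (M *t 1%:M) + (s * t) *: (M *t N)).
Proof.
apply/matrixP => i j; rewrite /Ob !mxE.
have h2 : (4 : C) = 2 * 2 by rewrite -natrM.
rewrite h2 invfM; ring.
Qed.

Lemma tr_Ob d (M N : 'M[C]_d) (s t : C) (rho : 'M[C]_(d * d)) :
  \tr ((Ob M s *t Ob N t) *m rho) = 4^-1 * (\tr rho + t * \tr ((1%:M *t N) *m rho)
     + s * \tr ((M *t 1%:M) *m rho) + (s * t) * \tr ((M *t N) *m rho)).
Proof.
by rewrite Ob_tens -scalemxAl mxtraceZ !mulmxDl -!scalemxAl !mxtraceD !mxtraceZ tens11 mul1mx.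
Qed.

Section Blk.
Variable d : nat.
Definition Lm : 'M[C]_(d, d + d) := row_mx 1%:M 0.
Definition Rm : 'M[C]_(d, d + d) := row_mx 0 1%:M.

Lemma adjLm : adj Lm = col_mx 1%:M 0.
Proof. by rewrite /adj /Lm tr_row_mx map_col_mx trmx1 trmx0 map_mx1 map_mx0. Qed.
Lemma adjRm : adj Rm = col_mx 0 1%:M.
Proof. by rewrite /adj /Rm tr_row_mx map_col_mx trmx1 trmx0 map_mx1 map_mx0. Qed.

Lemma LL : Lm *m adj Lm = 1%:M.
Proof. by rewrite adjLm /Lm mul_row_col mul1mx mul0mx addr0. Qed.
Lemma LR : Lm *m adj Rm = 0.
Proof. by rewrite adjRm /Lm mul_row_col mul1mx mul0mx addr0. Qed.
Lemma RL : Rm *m adj Lm = 0.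
Proof. by rewrite adjLm /Rm mul_row_col mul1mx mul0mx add0r. Qed.
Lemma RR : Rm *m adj Rm = 1%:M.
Proof. by rewrite adjRm /Rm mul_row_col mul1mx mul0mx add0r. Qed.
Lemma LRsum : adj Lm *m Lm + adj Rm *m Rm = 1%:M.
Proof.
rewrite adjLm adjRm /Lm /Rm !mul_col_row add_block_mx !mul1mx !mul0mx.
by rewrite !addr0 !add0r -scalar_mx_block.
Qed.

Definition Eb (M : 'M[C]_d) (s : C) : 'M[C]_(d + d) :=
  adj Lm *m Ob M s *m Lm + adj Rm *m Ob M (- s) *m Rm.

Lemma LEbL M s : Lm *m Eb M s *m adj Lm = Ob M s.
Proof.
rewrite /Eb mulmxDr mulmxDl !mulmxA LL LR mul1mx !mul0mx addr0.
by rewrite -mulmxA LL mulmx1.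
Qed.
Lemma REbR M s : Rm *m Eb M s *m adj Rm = Ob M (- s).
Proof.
rewrite /Eb mulmxDr mulmxDl !mulmxA RL RR mul1mx !mul0mx add0r.
by rewrite -mulmxA RR mulmx1.
Qed.

Lemma Eb_sum M s : Eb M s + Eb M (- s) = 1%:M.
Proof.
rewrite /Eb opprK addrACA -[_ + adj Lm *m Ob M (- s) *m Lm]mulmxDl.
rewrite -[_ + adj Rm *m Ob M s *m Rm]mulmxDl -(mulmxDr (adj Lm)) -(mulmxDr (adj Rm)).
by rewrite Ob_sum [Ob M (- s) + _]addrC Ob_sum !mulmx1 LRsum.
Qed.

Definition J1 : 'M[C]_(d * d, (d + d) * (d + d)) := Lm *t Lm.
Definition J2 : 'M[C]_(d * d, (d + d) * (d + d)) := Rm *t Rm.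

Definition rho2 (rho : 'M[C]_(d * d)) : 'M[C]_((d + d) * (d + d)) :=
  2^-1 *: (adj J1 *m rho *m J1 + adj J2 *m rho *m J2).

Lemma tr_conj k (T : 'M[C]_((d + d) * (d + d))) (J : 'M[C]_(k, (d+d)*(d+d))) (rho : 'M[C]_k) :
  \tr (T *m (adj J *m rho *m J)) = \tr (J *m T *m adj J *m rho).
Proof.
by rewrite mulmxA mxtrace_mulC !mulmxA.
Qed.

Lemma tr_rho2 (rho : 'M[C]_(d * d)) (E F : 'M[C]_(d + d)) :
  \tr ((E *t F) *m rho2 rho) = 2^-1 * (\tr (((Lm *m E *m adj Lm) *t (Lm *m F *m adj Lm)) *m rho)
      + \tr (((Rm *m E *m adj Rm) *t (Rm *m F *m adj Rm)) *m rho)).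
Proof.
rewrite /rho2 -scalemxAr mxtraceZ mulmxDr mxtraceD !tr_conj.
have key : forall X : 'M[C]_(d, d + d),
    (X *t X) *m (E *t F) *m adj (X *t X) = (X *m E *m adj X) *t (X *m F *m adj X).
  by move=> X; rewrite adj_tens tensmx_mul tensmx_mul.
by rewrite /J1 /J2 !key.
Qed.
Lemma density_rho2 rho : density rho -> density (rho2 rho).
Proof.
move=> [hp ht]; split.
  apply: psdZ; [exact: conj2V | by rewrite invr_ge0 ler0n |].
  by apply: psdD; apply: psd_congr.
have key : forall X : 'M[C]_(d, d + d), X *m adj X = 1%:M ->
    \tr (adj (X *t X) *m rho *m (X *t X)) = 1.
  move=> X hX; rewrite mxtrace_mulC mulmxA adj_tens tensmx_mul hX tens11 mul1mx //.
rewrite /rho2 mxtraceZ mxtraceD /J1 /J2 !key ?LL ?RR //.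
have h2 : (2 : C) != 0 by rewrite pnatr_eq0.
field; done.
Qed.

Lemma psd_Eb M s : obs_pm1 M -> (s = 1 \/ s = -1) -> psd (Eb M s).
Proof.
move=> hM hs; apply: psdD; apply: psd_congr; apply: psd_Ob => //.
by case: hs => ->; [right | left; rewrite opprK].
Qed.
Lemma tr_Eb2 rho (M N : 'M[C]_d) s t : \tr ((Eb M s *t Eb N t) *m rho2 rho) =
  2^-1 * (\tr ((Ob M s *t Ob N t) *m rho) + \tr ((Ob M (-s) *t Ob N (-t)) *m rho)).
Proof.
have H : forall (E F A B A' B' : 'M[C]_ _), Lm *m E *m adj Lm = A -> Lm *m F *m adj Lm = B ->
    Rm *m E *m adj Rm = A' -> Rm *m F *m adj Rm = B' ->
    \tr ((E *t F) *m rho2 rho) = 2^-1 * (\tr ((A *t B) *m rho) + \tr ((A' *t B') *m rho)).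
  by move=> E F A B A' B' <- <- <- <-; apply: tr_rho2.
exact: (H _ _ _ _ _ _ (LEbL M s) (LEbL N t) (REbR M s) (REbR N t)).
Qed.
Lemma alg_fin (X T1 T2 r n1 m1 e s t : C) : X = 2^-1*(T1+T2) ->
  T1 = 4^-1*(r + t * n1 + s * m1 + s * t * e) ->
  T2 = 4^-1*(r + -t * n1 + -s * m1 + (-s) * (-t) * e) -> r = 1 -> X = 4^-1*(1 + s * t * e).
Proof.
move=> -> -> -> ->.
have h2 : (2 : C) != 0 by rewrite pnatr_eq0.
have h4 : (4 : C) = 2 * 2 by rewrite -natrM.
rewrite h4 invfM; field.
done.
Qed.

Lemma final_tr rho (M N : 'M[C]_d) s t : \tr rho = 1 ->
  \tr ((Eb M s *t Eb N t) *m rho2 rho) = 4^-1 * (1 + s * t * \tr ((M *t N) *m rho)).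
Proof.
move=> h1.
exact: (alg_fin (tr_Eb2 rho M N s t) (tr_Ob M N s t rho) (tr_Ob M N (-s) (-t) rho) h1).
Qed.
End Blk.
End Spec.

Unset Implicit Arguments.

Theorem lemma5p7 (R : rcfType) (n m : nat) (c : 'M[R]_(n, m))
  (hC : Cor c)
  (u : 'I_n -> 'rV[R]_(n + m)) (v : 'I_m -> 'rV[R]_(n + m))
  (hu : forall x, dotr (u x) (u x) = 1)
  (hv : forall y, dotr (v y) (v y) = 1)
  (huv : forall x y, c x y = dotr (u x) (v y)) :
  (forall (a b : bool) (x : 'I_n) (y : 'I_m),
      pC c a b x y = dotr (ellv (u x) a) (ellv (v y) b)) /\
  gram_lorentz_behavior (pC c).
Proof.
have h4 : (4 : R) != 0 by rewrite pnatr_eq0.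
have part1 : forall (a b : bool) (x : 'I_n) (y : 'I_m),
      pC c a b x y = dotr (ellv (u x) a) (ellv (v y) b).
  by move=> a b x y; rewrite dotr_ellv -huv /pC; field.
split => //; split.
  case: hC => _ [d [M [N [rho [d0 [hM [hN [hrho hc]]]]]]]].
  pose sc (a : bool) : R[i] := real_complex R (sgnb R a).
  have hsc : forall a, sc a = 1 \/ sc a = -1.
    by case; rewrite /sc /sgnb ?rmorph1 ?rmorphN1; [left|right].
  have scN : forall a, sc (~~ a) = - sc a.
    by case; rewrite /sc /sgnb /= ?rmorph1 ?rmorphN1 ?opprK.
  exists (d + d)%N, (fun x a => Eb (M x) (sc a)), (fun y b => Eb (N y) (sc b)), (rho2 rho).
  split; first by rewrite addn_gt0 d0.
  split; first exact: density_rho2.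
  split; first by move=> x a; apply: psd_Eb.
  split; first by move=> x; rewrite big_bool /= (_ : sc false = - sc true) ?Eb_sum // -scN.
  split; first by move=> y b; apply: psd_Eb.
  split; first by move=> y; rewrite big_bool /= (_ : sc false = - sc true) ?Eb_sum // -scN.
  move=> a b x y.
  have htr : \tr rho = 1 by case: hrho.
  rewrite (final_tr (M x) (N y) (sc a) (sc b) htr) -hc.
  by rewrite /pC /sc rmorphM fmorphV rmorphD rmorph1 !rmorphM rmorph_nat mulrC.
pose w (i : bidx n m bool bool) : 'rV[R]_(1 + (n + m)) :=
  match i with inl (x, a) => ellv (u x) a | inr (y, b) => ellv (v y) b end.
exists (fun i j => dotr (w i) (w j)); split; last first.
  by exists (n + m), w; split => // -[[x a]|[y b]]; apply: lorentz_ellv.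
split; first by move=> i j; apply: dotrC.
have hs : forall t : R, \sum_(a : bool) \sum_(b : bool) 4^-1 * (1 + sgnb R a * sgnb R b * t) = 1.
  by move=> t; rewrite !big_bool /= /sgnb; field.
split; first by move=> x x'; rewrite -[RHS](hs (dotr (u x) (u x'))); apply: eq_bigr => a _; apply: eq_bigr => b _; rewrite /= dotr_ellv.
split; first by move=> x y; rewrite -[RHS](hs (dotr (u x) (v y))); apply: eq_bigr => a _; apply: eq_bigr => b _; rewrite /= dotr_ellv.
split; first by move=> y y'; rewrite -[RHS](hs (dotr (v y) (v y'))); apply: eq_bigr => a _; apply: eq_bigr => b _; rewrite /= dotr_ellv.
by move=> a b x y; rewrite part1.
Qed.
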